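(* For every integer $r\ge 0$, the graph invariants $P_*^{(r)}$ and $\alpha_*^{(r)}$ are equivalent, i.e. for all graphs $G,H$: $P_*^{(r)}(G)=P_*^{(r)}(H)$ if and only if $\alpha_*^{(r)}(G)=\alpha_*^{(r)}(H)$.
   Context: Graphs are finite, simple and undirected; an $n$-vertex graph $G$ has $V(G)=\{1,\dots,n\}$ and adjacency matrix $A$. Let $\mu_1<\mu_2<\dots<\mu_m$ be the pairwise distinct eigenvalues of $A$, $E_i$ the eigenspace of $\mu_i$, and $P_i$ the matrix of the orthogonal projection of $\mathbb{R}^n$ onto $E_i$. For a vertex pair $(x,y)$ let $P_*(x,y)=(P_1(x,y),\dots,P_m(x,y))$. Let $\mathrm{e}_x$ be the standard basis vector. Let $\alpha_{i,x}=\|P_i\mathrm{e}_x\|$ (the cosine of the angle between $\mathrm{e}_x$ and $E_i$), and let $\alpha_{i,xy}$ be the cosine of the angle between $P_i\mathrm{e}_x$ and $P_i\mathrm{e}_y$, with $\alpha_{i,xy}=0$ if $P_i\mathrm{e}_x=0$ or $P_i\mathrm{e}_y=0$. Define $\alpha_i(x,x)=\alpha_{i,x}$, $\alpha_i(x,y)=\alpha_{i,xy}$ for $x\neq y$, and $\alpha_*(x,y)=(\alpha_1(x,y),\dots,\alpha_m(x,y))$. General framework: for a pair coloring $\chi$ (a map assigning to each graph $G$ and each $(x,y)\in V(G)^2$ a value $\chi(x,y)$, invariant under isomorphisms) define vertex colorings $\chi_0(x)=\chi(x,x)$, $\chi_{r+1}(x)=\big(\chi_r(x),\{\!\{(\chi(x,y),\chi_r(y))\}\!\}_{y\in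 V(G)}\big)$ for integers $r\ge0$, and $\chi_{1/2}(x)=\big(\chi(x,x),\{\!\{\chi(x,y)\}\!\}_{y\in V(G)}\big)$, where $\{\!\{\cdot\}\!\}$ denotes a multiset. The graph invariant $\chi^{(r)}$ is $\chi^{(r)}(G)=\{\!\{\chi_r(x)\}\!\}_{x\in V(G)}$. Two invariants $\mathcal I,\mathcal I'$ are equivalent if each determines the other, i.e. $\mathcal I(G)=\mathcal I(H)\iff \mathcal I'(G)=\mathcal I'(H)$ for all graphs $G,H$. *)

(* Defs.v *)
From HB Require Import structures.
From mathcomp Require Import all_boot all_order all_algebra.
From mathcomp Require Import finmap multiset.
From mathcomp Require Import polyrcf.
Set Implicit Arguments. Unset Strict Implicit. Unset Printing Implicit Defensive.
Import Order.TTheory GRing.Theory Num.Theory.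

Record graph (n : nat) := Graph {
  adj : rel 'I_n ;
  adj_sym : symmetric adj ;
  adj_irr : irreflexive adj }.

Definition pcol (C : choiceType) := forall n, graph n -> 'I_n -> 'I_n -> C.

Fixpoint colT (C : choiceType) (r : nat) : choiceType :=
  match r with
  | 0 => C
  | r'.+1 => (colT C r' * multiset (C * colT C r'))%type
  end.

Fixpoint chi_col (C : choiceType) (chi : pcol C) (r : nat) (n : nat)
    (G : graph n) (x : 'I_n) : colT C r :=
  match r return colT C r with
  | 0 => chi n G x x
  | r'.+1 => (chi_col chi r' G x,
              seq_mset [seq (chi n G x y, chi_col chi r' G y) | y <- enum 'I_n])
  end.

Definition chi_inv (C : choiceType) (chi : pcol C) (r : nat) (n : nat)
    (G : graph n) : multiset (colT C r) :=
  seq_mset [seq chi_col chi r G x | x <- enum 'I_n].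

Local Open Scope ring_scope.

Section Spectral.
Variable R : rcfType.

Definition adjmx n (G : graph n) : 'M[R]_n := \matrix_(i, j) (adj G i j)%:R.

(* mu_1 < mu_2 < ... < mu_m : the distinct eigenvalues of A (sorted). *)
Definition eigs n (G : graph n) : seq R := rootsR (char_poly (adjmx G)).

(* Matrix of the orthogonal projection of R^n onto the row space of U:
   with B a basis (rows) of that space, P = B^T (B B^T)^-1 B. *)
Definition orth_proj n (U : 'M[R]_n) : 'M[R]_n :=
  let B := row_base U in B^T *m invmx (B *m B^T) *m B.

Definition eproj n (G : graph n) (mu : R) : 'M[R]_n :=
  orth_proj (eigenspace (adjmx G) mu).

Definition vdot n (u v : 'rV[R]_n) : R := \sum_j u 0 j * v 0 j.
Definition vnorm n (u : 'rV[R]_n) : R := Num.sqrt (vdot u u).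

Definition vcos n (u v : 'rV[R]_n) : R :=
  if (u == 0) || (v == 0) then 0 else vdot u v / (vnorm u * vnorm v).

Definition proj_e n (P : 'M[R]_n) (x : 'I_n) : 'rV[R]_n := delta_mx 0 x *m P.

Definition alpha n (P : 'M[R]_n) (x y : 'I_n) : R :=
  if x == y then vnorm (proj_e P x) else vcos (proj_e P x) (proj_e P y).

Definition Pstar : pcol (seq R : choiceType) :=
  fun n G x y => [seq eproj G mu x y | mu <- eigs G].

Definition astar : pcol (seq R : choiceType) :=
  fun n G x y => [seq alpha (eproj G mu) x y | mu <- eigs G].

End Spectral.

(* Main.v *)
Require Import Defs.
From HB Require Import structures.
From mathcomp Require Import all_boot all_order all_algebra.
From mathcomp Require Import finmap multiset.
From mathcomp Require Import polyrcf complex.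
From mathcomp Require Import ring.
Set Implicit Arguments. Unset Strict Implicit. Unset Printing Implicit Defensive.

Fixpoint dcol (C : choiceType) (r : nat) : colT C r -> C :=
  match r return colT C r -> C with
  | 0 => fun c => c
  | r'.+1 => fun c => @dcol C r' c.1
  end.

Fixpoint Fcol (C1 C2 : choiceType) (h : C1 -> C1 -> C1 -> C2) (r : nat) :
  colT C1 r -> colT C2 r :=
  match r return colT C1 r -> colT C2 r with
  | 0 => fun c => h c c c
  | r'.+1 => fun c =>
      (@Fcol C1 C2 h r' c.1,
       seq_mset [seq (h pc.1 (dcol c.1) (dcol pc.2), @Fcol C1 C2 h r' pc.2) | pc <- enum_mset (c.2 : multiset _)])
  end.

Lemma seq_mset_map (T U : choiceType) (g : T -> U) (s : seq T) :
  seq_mset [seq g x | x <- enum_mset (seq_mset s)] = seq_mset [seq g x | x <- s].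
Proof. by apply/eq_seq_msetP; apply: perm_map; apply: perm_eq_seq_mset. Qed.

Lemma dcolE (C : choiceType) (chi : pcol C) r n (G : graph n) x :
  dcol (chi_col chi r G x) = chi n G x x.
Proof. by elim: r => //= r ->. Qed.

Lemma FcolE (C1 C2 : choiceType) (chi1 : pcol C1) (chi2 : pcol C2) h
  (Hh : forall n (G : graph n) x y,
      chi2 n G x y = h (chi1 n G x y) (chi1 n G x x) (chi1 n G y y)) r n (G : graph n) x :
  chi_col chi2 r G x = @Fcol C1 C2 h r (chi_col chi1 r G x).
Proof.
elim: r x => [|r IH] x /=; first by rewrite Hh.
rewrite IH seq_mset_map -[in RHS]map_comp; congr (_, seq_mset _).
by apply: eq_map => y /=; rewrite Hh !dcolE IH.
Qed.

Lemma transfer (C1 C2 : choiceType) (chi1 : pcol C1) (chi2 : pcol C2) h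
  (Hh : forall n (G : graph n) x y,
      chi2 n G x y = h (chi1 n G x y) (chi1 n G x x) (chi1 n G y y)) r n m
  (G : graph n) (H : graph m) :
  chi_inv chi1 r G = chi_inv chi1 r H -> chi_inv chi2 r G = chi_inv chi2 r H.
Proof.
rewrite /chi_inv => E.
have EQ : forall k (K : graph k), seq_mset [seq chi_col chi2 r K x | x <- enum 'I_k] =
   seq_mset [seq @Fcol C1 C2 h r x | x <- enum_mset (seq_mset [seq chi_col chi1 r K x | x <- enum 'I_k])].
  by move=> k K; rewrite seq_mset_map -[in RHS]map_comp; congr seq_mset; apply: eq_map => x /=;
     rewrite (FcolE Hh).
by rewrite (EQ n G) (EQ m H) E.
Qed.

Import Order.TTheory GRing.Theory Num.Theory.
Local Open Scope ring_scope.

Section Proj.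
Variable R : rcfType.

Definition symidem n (P : 'M[R]_n) := P^T = P /\ P *m P = P.

Lemma vdot_proj n (P : 'M[R]_n) x y : symidem P ->
  vdot (proj_e P x) (proj_e P y) = P x y.
Proof.
move=> [PT PP]; rewrite /vdot /proj_e -!rowE -{3}PP mxE.
apply: eq_bigr => j _; rewrite !mxE; congr (_ * _).
by rewrite -{1}PT mxE.
Qed.

Lemma vdot_self_eq0 n (u : 'rV[R]_n) : (vdot u u == 0) = (u == 0).
Proof.
apply/eqP/eqP => [H|->]; last by rewrite /vdot big1 // => j _; rewrite mxE mulr0.
apply/rowP => j; rewrite mxE.
have := @psumr_eq0P _ _ predT (fun j => u 0 j * u 0 j) _ H j isT.
have hp : forall i : 'I_n, predT i -> 0 <= u 0 i * u 0 i by move=> i _; rewrite -expr2 sqr_ge0.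
by move=> /(_ hp)/eqP; rewrite mulf_eq0 orbb => /eqP.
Qed.

Lemma vdot_self_ge0 n (u : 'rV[R]_n) : 0 <= vdot u u.
Proof. by rewrite /vdot sumr_ge0 // => j _; rewrite -expr2 sqr_ge0. Qed.

Lemma proj_diag_ge0 n (P : 'M[R]_n) x : symidem P -> 0 <= P x x.
Proof. by move=> sP; rewrite -vdot_proj // vdot_self_ge0. Qed.

Lemma proj_e_eq0 n (P : 'M[R]_n) x : symidem P -> (proj_e P x == 0) = (P x x == 0).
Proof. by move=> sP; rewrite -vdot_self_eq0 vdot_proj. Qed.

Lemma proj_off0 n (P : 'M[R]_n) x y : symidem P -> P x x = 0 -> P x y = 0.
Proof.
move=> sP /eqP; rewrite -proj_e_eq0 // => /eqP H.
by rewrite -vdot_proj // H /vdot big1 // => j _; rewrite mxE mul0r.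
Qed.

Lemma alphaE n (P : 'M[R]_n) x y : symidem P ->
  alpha P x y = if x == y then Num.sqrt (P x x) else
     if (P x x == 0) || (P y y == 0) then 0 else P x y / (Num.sqrt (P x x) * Num.sqrt (P y y)).
Proof.
move=> sP; rewrite /alpha /vcos /vnorm !vdot_proj // !proj_e_eq0 //.
Qed.


Lemma alphaD n (P : 'M[R]_n) x : symidem P -> alpha P x x = Num.sqrt (P x x).
Proof. by move=> sP; rewrite /alpha eqxx /vnorm vdot_proj. Qed.

Lemma proj_sym n (P : 'M[R]_n) x y : symidem P -> P x y = P y x.
Proof. by move=> [PT _]; rewrite -{1}PT mxE. Qed.

Lemma alpha_mul n (P : 'M[R]_n) x y : symidem P -> x != y ->
  P x y = alpha P x y * Num.sqrt (P x x) * Num.sqrt (P y y).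
Proof.
move=> sP nxy; rewrite alphaE // (negbTE nxy).
case: ifP => [/orP [] /eqP H|/norP [a b]].
- by rewrite proj_off0 // !mul0r.
- by rewrite proj_sym // proj_off0 // !mul0r.
have ha : Num.sqrt (P x x) != 0 by rewrite sqrtr_eq0 -ltNge lt_def a proj_diag_ge0.
have hb : Num.sqrt (P y y) != 0 by rewrite sqrtr_eq0 -ltNge lt_def b proj_diag_ge0.
by rewrite -mulrA divfK // mulf_neq0.
Qed.

Definition spec_ok n (Ps : seq 'M[R]_n) :=
  (forall P, P \in Ps -> symidem P) /\ \sum_(P <- Ps) P = 1%:M.

Definition hPA (p px py : seq R) : seq R :=
  if p == px then map Num.sqrt px else
  [seq (if (t.1.2 == 0) || (t.2 == 0) then 0 else t.1.1 / (Num.sqrt t.1.2 * Num.sqrt t.2))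
     | t <- zip (zip p px) py].

Definition hAP (a ax ay : seq R) : seq R :=
  if a == ax then [seq u ^+ 2 | u <- ax] else
  [seq t.1.1 * t.1.2 * t.2 | t <- zip (zip a ax) ay].

Lemma zip3map (T U : Type) (f g k : T -> U) (s : seq T) :
  zip (zip (map f s) (map g s)) (map k s) = map (fun z => ((f z, g z), k z)) s.
Proof. by elim: s => //= z s ->. Qed.

Lemma K1 n (Ps : seq 'M[R]_n) x y : spec_ok Ps -> x != y ->
  map (fun P : 'M_n => P x y) Ps != map (fun P : 'M_n => P x x) Ps.
Proof.
move=> [_ S] nxy; apply/eqP => E.
have : \sum_(a <- map (fun P : 'M_n => P x y) Ps) a = \sum_(a <- map (fun P : 'M_n => P x x) Ps) a
  by rewrite E.
rewrite !big_map -!summxE S !mxE eqxx (negbTE nxy) /= => /eqP.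
by rewrite eq_sym oner_eq0.
Qed.

Lemma K2 n (Ps : seq 'M[R]_n) x y : spec_ok Ps -> x != y ->
  map (fun P : 'M_n => alpha P x y) Ps != map (fun P : 'M_n => alpha P x x) Ps.
Proof.
move=> [sP S] nxy; apply/eqP => /eq_in_map E.
have Pxy : forall P, P \in Ps -> P x y = Num.sqrt (P x x) ^+ 2 * Num.sqrt (P y y).
  move=> P PP; have sPP := sP P PP; rewrite alpha_mul //.
  rewrite (_ : alpha P x y = alpha P x x); last exact: E P PP.
  rewrite alphaE // (_ : (x == x) = true) ?expr2 //; exact/eqP.
have Pxy0 : forall P, P \in Ps -> P x y = 0.
  have : \sum_(P <- Ps | P \in Ps) P x y = 0 by rewrite -big_seq -summxE S !mxE (negbTE nxy).
  move/eqP; rewrite psumr_eq0 => [/allP H Q PQ|Q PQ].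
    by move: (H Q PQ); rewrite PQ => /eqP.
  by rewrite Pxy // mulr_ge0 ?exprn_ge0 ?sqrtr_ge0.
have Pxx0 : forall P, P \in Ps -> P x x = 0.
  move=> P PP; have sPP := sP P PP.
  have sq0 : forall z : R, 0 <= z -> Num.sqrt z = 0 -> z = 0.
    move=> z z0 zs; have := sqrtr_eq0 z; rewrite zs eqxx => /esym zl.
    by apply/eqP; rewrite eq_le zl z0.
  have := Pxy0 P PP; rewrite Pxy // => /eqP; rewrite mulf_eq0 expf_eq0 /= => /orP [] /eqP H.
    by apply: sq0 H; apply: proj_diag_ge0.
  have Pyy : P y y = 0 by apply: sq0 H; apply: proj_diag_ge0.
  have : alpha P x y = alpha P x x by exact: E P PP.
  rewrite !alphaE // (negbTE nxy) Pyy eqxx orbT (_ : (x == x) = true); last exact/eqP.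
  by move/esym; apply: sq0; apply: proj_diag_ge0.
have : \sum_(P <- Ps) P x x = 1 by rewrite -summxE S !mxE (_ : (x == x) = true) //; exact/eqP.
rewrite big_seq big1 => [/eqP|P PP]; last exact: Pxx0.
by rewrite eq_sym oner_eq0.
Qed.

Lemma HPA n (Ps : seq 'M[R]_n) x y : spec_ok Ps ->
  map (fun P : 'M_n => alpha P x y) Ps =
  hPA (map (fun P : 'M_n => P x y) Ps) (map (fun P : 'M_n => P x x) Ps)
      (map (fun P : 'M_n => P y y) Ps).
Proof.
move=> sO; rewrite /hPA; case: (eqVneq x y) => [exy|nxy]; first subst y.
  rewrite eqxx -map_comp; apply/eq_in_map => P PP /=.
  by rewrite (alphaD _ (sO.1 P PP)).
rewrite (negbTE (K1 sO nxy)) zip3map -map_comp; apply/eq_in_map => P PP /=.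
by rewrite (alphaE _ _ (sO.1 P PP)) (negbTE nxy).
Qed.

Lemma HAP n (Ps : seq 'M[R]_n) x y : spec_ok Ps ->
  map (fun P : 'M_n => P x y) Ps =
  hAP (map (fun P : 'M_n => alpha P x y) Ps) (map (fun P : 'M_n => alpha P x x) Ps)
      (map (fun P : 'M_n => alpha P y y) Ps).
Proof.
move=> sO; rewrite /hAP; case: (eqVneq x y) => [exy|nxy]; first subst y.
  rewrite eqxx -map_comp; apply/eq_in_map => P PP /=.
  rewrite (alphaD _ (sO.1 P PP)).
  by rewrite sqr_sqrtr // proj_diag_ge0 //; exact: (sO.1 P PP).
rewrite (negbTE (K2 sO nxy)) zip3map -map_comp; apply/eq_in_map => P PP /=.
by rewrite (alpha_mul (sO.1 P PP) nxy) !(alphaD _ (sO.1 P PP)).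
Qed.

End Proj.

Import Order.TTheory GRing.Theory Num.Theory.
Local Open Scope ring_scope.

Section OrthProj.
Variable R : rcfType.

Lemma gram0 p q (W : 'M[R]_(p, q)) : W *m W^T = 0 -> W = 0.
Proof.
move=> H; apply/row_matrixP => i; apply/eqP; rewrite row0 -vdot_self_eq0; apply/eqP.
have := congr1 (fun M : 'M_p => M i i) H; rewrite !mxE => <-.
by apply: eq_bigr => j _; rewrite !mxE.
Qed.

Lemma gram_unit k n (B : 'M[R]_(k, n)) : row_free B -> B *m B^T \in unitmx.
Proof.
move=> fB; rewrite -row_free_unit -kermx_eq0; apply/eqP.
set K := kermx _.
have KB : (K *m B) *m (K *m B)^T = 0.
  by rewrite trmx_mul mulmxA -(mulmxA K) mulmx_ker mul0mx.
by apply/eqP; rewrite -(mulmx_free_eq0 _ fB); apply/eqP; apply: gram0.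
Qed.

Lemma gproj_symidem k n (B : 'M[R]_(k, n)) : row_free B ->
  symidem (B^T *m invmx (B *m B^T) *m B).
Proof.
move=> fB; have uM := gram_unit fB.
split.
  by rewrite !trmx_mul trmxK trmx_inv trmx_mul trmxK mulmxA.
rewrite -!mulmxA; congr (_ *m _).
by rewrite (mulmxA B) mulmxA mulVmx // mul1mx.
Qed.

Lemma orth_proj_symidem n (U : 'M[R]_n) : symidem (orth_proj U).
Proof. exact: gproj_symidem (row_base_free U). Qed.

Lemma gproj_fix k n (B : 'M[R]_(k, n)) m (v : 'M[R]_(m, n)) : row_free B ->
  (v <= B)%MS -> v *m (B^T *m invmx (B *m B^T) *m B) = v.
Proof.
move=> fB /submxP [D ->]; have uM := gram_unit fB.
by rewrite !mulmxA -(mulmxA D) -(mulmxA D) mulmxV // mulmx1.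
Qed.

Lemma gproj_kill k n (B : 'M[R]_(k, n)) m (v : 'M[R]_(m, n)) :
  v *m B^T = 0 -> v *m (B^T *m invmx (B *m B^T) *m B) = 0.
Proof. by move=> H; rewrite !mulmxA H !mul0mx. Qed.

End OrthProj.

Section EigOrth.
Variable R : rcfType.

Lemma eig_orth n (A : 'M[R]_n) (sA : A^T = A) a b p q (U : 'M_(p, n)) (W : 'M_(q, n)) :
  (U <= eigenspace A a)%MS -> (W <= eigenspace A b)%MS -> a != b -> U *m W^T = 0.
Proof.
move=> /eigenspaceP UA /eigenspaceP WA nab.
have e1 : U *m A *m W^T = a *: (U *m W^T) by rewrite UA scalemxAl.
have e2 : U *m A *m W^T = b *: (U *m W^T).
  by rewrite -mulmxA -sA -trmx_mul WA linearZ /= scalemxAr.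
have : (a - b) *: (U *m W^T) = 0 by rewrite scalerBl -e1 -e2 subrr.
by move/eqP; rewrite scalemx_eq0 subr_eq0 (negbTE nab) => /eqP.
Qed.

Lemma proj_sum n (A : 'M[R]_n) (sA : A^T = A) (s : seq R) (us : uniq s)
  (span : (1%:M <= \sum_(i < size s) eigenspace A s`_i)%MS) :
  \sum_(mu <- s) orth_proj (eigenspace A mu) = 1%:M.
Proof.
rewrite (big_nth 0) big_mkord.
set Q := fun i : 'I_(size s) => orth_proj (eigenspace A s`_i).
suff key : forall v : 'rV[R]_n, v *m \sum_(i < size s) Q i = v.
  by apply/row_matrixP => i; rewrite !rowE mulmx1 key.
move=> v; have /sub_sumsmxP [u vE] : (v <= \sum_(i < size s) eigenspace A s`_i)%MS.
  exact: submx_trans (submx1 v) span.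
have Qj : forall i j : 'I_(size s), (u i *m eigenspace A s`_i) *m Q j =
    if i == j then u i *m eigenspace A s`_i else 0.
  move=> i j; rewrite /Q /orth_proj /=; case: eqP => [<-|/eqP nij].
    apply: gproj_fix; first exact: row_base_free.
    by rewrite eq_row_base submxMl.
  apply: gproj_kill; apply: (eig_orth sA (a := s`_i) (b := s`_j)).
  - exact: submxMl.
  - by rewrite eq_row_base.
  by rewrite nth_uniq // => /eqP /val_inj /eqP; rewrite (negbTE nij).
rewrite mulmx_sumr {2}vE; apply: eq_bigr => j _.
rewrite vE mulmx_suml (bigD1 j) //= Qj eqxx big1 ?addr0 // => i nij.
by rewrite Qj (negbTE nij).
Qed.

End EigOrth.

Import Order.TTheory GRing.Theory Num.Theory.
Local Open Scope ring_scope.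

Section Spanning.
Variable R : rcfType.
Local Notation C := (R[i]).
Local Notation fc := (real_complex R).

Lemma fc_real (x : R) : (fc x) \is Num.real.
Proof. by rewrite complex_real. Qed.

Lemma eig_real n (A : 'M[R]_n) (sA : A^T = A) (z : C) :
  eigenvalue (map_mx fc A) z -> exists k : R, z = fc k.
Proof.
move=> /eigenvalueP [v vA v0].
set A' := map_mx fc A in vA.
have cA : map_mx Num.conj A' = A'.
  by apply/matrixP => i j; rewrite !mxE conj_Creal // fc_real.
have sA' : A'^T = A' by rewrite /A' map_trmx sA.
set w := map_mx Num.conj v.
have wA : w *m A' = z^* *: w.
  by rewrite -{1}cA /w -map_mxM vA map_mxZ.
have e1 : v *m A' *m w^T = z *: (v *m w^T) by rewrite vA scalemxAl.
have e2 : v *m A' *m w^T = z^* *: (v *m w^T).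
  by rewrite -mulmxA -sA' -trmx_mul wA linearZ /= scalemxAr.
have vw : v *m w^T != 0.
  apply: contra v0 => /eqP /matrixP /(_ 0 0); rewrite !mxE => H.
  apply/eqP/rowP => j; rewrite mxE.
  have := @psumr_eq0P _ _ predT (fun j => v 0 j * (v 0 j)^*) (fun j _ => mul_conjC_ge0 _) _ j isT.
  rewrite -(_ : \sum_j v 0 j * w^T j 0 = \sum_j v 0 j * (v 0 j)^*); last first.
    by apply: eq_bigr => k _; rewrite !mxE.
  by move=> /(_ H)/eqP; rewrite mul_conjC_eq0 => /eqP.
have : (z - z^*) *: (v *m w^T) = 0 by rewrite scalerBl -e1 -e2 subrr.
move/eqP; rewrite scalemx_eq0 (negbTE vw) orbF subr_eq0 eq_sym -CrealE.
by move/complex_realP.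
Qed.

Lemma tr_horner n (A : 'M[R]_n.+1) (sA : A^T = A) p :
  (horner_mx A p)^T = horner_mx A p.
Proof.
elim/poly_ind: p => [|p c IH]; first by rewrite rmorph0 trmx0.
rewrite rmorphD rmorphM /= horner_mx_X horner_mx_C raddfD /= tr_scalar_mx.
congr (_ + _); rewrite [LHS]trmx_mul IH sA.
exact: (comm_mx_horner p (erefl (A *m A))).
Qed.

Lemma sqfree_step n (A : 'M[R]_n.+1) (sA : A^T = A) a g :
  horner_mx A (('X - a%:P) ^+ 2 * g) = 0 -> horner_mx A (('X - a%:P) * g) = 0.
Proof.
move=> H; set N := horner_mx A _.
have NN : N * N = 0.
  by rewrite /N -rmorphM /= mulrACA -expr2 mulrA rmorphM /= H mul0r.
by apply: gram0; rewrite tr_horner.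
Qed.

Lemma undup_kill n (A : 'M[R]_n.+1) (sA : A^T = A) (t : seq R) q :
  horner_mx A (q * \prod_(x <- t) ('X - x%:P)) = 0 ->
  horner_mx A (q * \prod_(x <- undup t) ('X - x%:P)) = 0.
Proof.
elim: t q => [//|a t IH] q /=; case: ifP => aint.
  rewrite big_cons => H; apply: IH.
  move: H; rewrite (perm_big _ (perm_to_rem aint)) big_cons /=.
  set P := \prod_(_ <- _) _; set X := 'X - a%:P => H.
  have := @sqfree_step n A sA a (q * P).
  have -> : X ^+ 2 * (q * P) = q * (X * (X * P)) by rewrite /X; ring.
  by move=> /(_ H); have -> : X * (q * P) = q * (X * P) by ring.
rewrite !big_cons => H; rewrite mulrA; apply: IH; rewrite -mulrA //.
Qed.

Lemma minpoly_split n (A : 'M[R]_n.+1) (sA : A^T = A) :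
  exists rs : seq R, mxminpoly A = \prod_(x <- rs) ('X - x%:P).
Proof.
have [rsC E] := closed_field_poly_normal (map_poly fc (mxminpoly A)).
have mon : map_poly fc (mxminpoly A) \is monic by rewrite map_monic mxminpoly_monic.
rewrite (monicP mon) scale1r in E.
have realz : forall z, z \in rsC -> exists k, z = fc k.
  move=> z zin; apply: (eig_real sA).
  by rewrite eigenvalue_root_min mxminpoly_map E root_prod_XsubC.
exists (map (fun z : C => complex.Re z) rsC); apply: (map_poly_inj fc).
rewrite E rmorph_prod big_map; apply: eq_big_seq => z zin.
have [k ->] := realz z zin.
by rewrite /= map_polyXsubC.
Qed.

Lemma span_eig n (A : 'M[R]_n) (sA : A^T = A) :
  (1%:M <= \sum_(i < size (rootsR (char_poly A))) eigenspace A (rootsR (char_poly A))`_i)%MS.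
Proof.
case: n A sA => [|n] A sA.
  by rewrite (thinmx0 1%:M) sub0mx.
set s := rootsR _.
have [rs E] := minpoly_split sA.
have H0 : horner_mx A (1 * \prod_(x <- rs) ('X - x%:P)) = 0 by rewrite mul1r -E mx_root_minpoly.
have H1 := undup_kill sA H0; rewrite mul1r in H1.
have diag := (diagonalizableP A).2 (ex_intro2 _ _ (undup rs) (undup_uniq rs) (mxminpoly_min H1)).
have [rs2 _ S2] := (diagonalizablePeigen (f := A)).1 diag.
rewrite -S2 (big_nth 0) big_mkord; apply/sumsmx_subP => i _.
set r := rs2`_i.
have [E0|nE0] := eqVneq (eigenspace A r) 0; first by rewrite E0 sub0mx.
have rin : r \in s.
  have := roots_on_rootsR (monic_neq0 (char_poly_monic A)) r.
  rewrite -eigenvalue_root_char /eigenvalue nE0 andbT => <-.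
  by rewrite in_itv.
have ji : (index r s < size s)%N by rewrite index_mem.
by apply: (sumsmx_sup (Ordinal ji)) => //=; rewrite nth_index.
Qed.

End Spanning.

Import Order.TTheory GRing.Theory Num.Theory.
Local Open Scope ring_scope.

Lemma adjmx_sym (R : rcfType) n (G : graph n) : (adjmx R G)^T = adjmx R G.
Proof. by apply/matrixP => i j; rewrite !mxE adj_sym. Qed.

Lemma graph_spec_ok (R : rcfType) n (G : graph n) :
  spec_ok (map (eproj G) (eigs R G)).
Proof.
split.
  by move=> P /mapP [mu _ ->]; apply: orth_proj_symidem.
rewrite big_map; apply: proj_sum; first exact: adjmx_sym.
  exact: uniq_roots.
rewrite /eigs; exact: span_eig (@adjmx_sym R n G).
Qed.

Lemma PstarE (R : rcfType) n (G : graph n) x y :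
  Pstar R G x y = map (fun P : 'M_n => P x y) (map (eproj G) (eigs R G)).
Proof. by rewrite -map_comp. Qed.

Lemma astarE (R : rcfType) n (G : graph n) x y :
  astar R G x y = map (fun P : 'M_n => alpha P x y) (map (eproj G) (eigs R G)).
Proof. by rewrite -map_comp. Qed.

Theorem lemma3p1 (R : rcfType) (r : nat) (n m : nat) (G : graph n) (H : graph m) :
  chi_inv (Pstar R) r G = chi_inv (Pstar R) r H <->
  chi_inv (astar R) r G = chi_inv (astar R) r H.
Proof.
split; apply: transfer.
- by move=> k K x y; rewrite !PstarE !astarE; apply: HPA; apply: graph_spec_ok.
- by move=> k K x y; rewrite !PstarE !astarE; apply: HAP; apply: graph_spec_ok.
Qed.
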